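(* Let $n\ge1$, $\lambda>0$, and let $\{e_m\}_{1\le m\le n}\cup\{f_{m,k}\}_{1\le m,k\le n}$ be $n^2+n$ independent exponential random variables with parameter $\lambda$. For $k=1,\ldots,n$ let $\mathcal{T}^k=\max_{1\le m\le n}\,(e_m+f_{m,k})$. Then $$\mathbb{E}\left[\max_{1\le k\le n}\max\{e_k,\mathcal{T}^k\}\right]\le\frac{2H_{n^2+n}}{\lambda},$$ where $H_N=\sum_{j=1}^N\frac1j$ is the $N$-th harmonic number.
   Context: In the paper, $e_k$ is the delay of the supervisor's trigger message to worker $k$ and $\mathcal{T}^k$ is the time at which worker $k$ has received all its ''redirect'' messages, each being a two-message chain (trigger to worker $m$, then redirect from $m$ to $k$); the abstract formulation above records this structure. *)

(* Defs.v *)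
From HB Require Import structures.
From mathcomp Require Import all_boot all_order all_algebra.
From mathcomp Require Import all_classical all_reals all_analysis.
Set Implicit Arguments. Unset Strict Implicit. Unset Printing Implicit Defensive.
Import Order.TTheory GRing.Theory Num.Theory.
Local Open Scope classical_set_scope.
Local Open Scope ring_scope.

Definition harmonic_number {R : realType} (N : nat) : R :=
  \sum_(j < N) (j.+1%:R)^-1.

Definition mutually_independent {d} {T : measurableType d} {R : realType}
  (P : probability T R) {I : finType} (X : I -> {RV P >-> R}) : Prop :=
  forall (J : {set I}) (B : I -> set R),
    (forall i, measurable (B i)) ->
    P [set w | forall i, i \in J -> B i (X i w)] =
    \big[*%E/1%E]_(i in J) P (X i @^-1` B i).

Definition exponentially_distributed {d} {T : measurableType d} {R : realType}
  (P : probability T R) (lam : R) (X : {RV P >-> R}) : Prop :=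
  forall A : set R, measurable A -> distribution P X A = exponential_prob lam A.

Definition ef_family {d} {T : measurableType d} {R : realType}
  (P : probability T R) (n : nat)
  (e : 'I_n -> {RV P >-> R}) (f : 'I_n -> 'I_n -> {RV P >-> R})
  : ('I_n + 'I_n * 'I_n)%type -> {RV P >-> R} :=
  fun i => match i with inl m => e m | inr mk => f mk.1 mk.2 end.

Definition Tk {d} {T : measurableType d} {R : realType}
  (P : probability T R) (n : nat)
  (e : 'I_n -> {RV P >-> R}) (f : 'I_n -> 'I_n -> {RV P >-> R})
  (k : 'I_n) (w : T) : \bar R :=
  \big[maxe/-oo%E]_(m < n) (e m w + f m k w)%:E.

Definition completion_time {d} {T : measurableType d} {R : realType}
  (P : probability T R) (n : nat)
  (e : 'I_n -> {RV P >-> R}) (f : 'I_n -> 'I_n -> {RV P >-> R})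
  (w : T) : \bar R :=
  \big[maxe/-oo%E]_(k < n) maxe (e k w)%:E (Tk e f k w).

(* Main.v *)
Require Import Defs.
From HB Require Import structures.
From mathcomp Require Import all_boot all_order all_algebra.
From mathcomp Require Import all_classical all_reals all_analysis.
From mathcomp Require Import measurable_realfun.
From mathcomp.algebra_tactics Require Import ring lra.
Import Order.TTheory GRing.Theory Num.Theory.
Import numFieldNormedType.Exports.
Local Open Scope classical_set_scope.
Local Open Scope ring_scope.

Section calc.
Variables (R : realType) (lam : R).
Hypothesis lam0 : 0 < lam.

Lemma du (x : R) : is_derive x 1 (fun x => expR (- lam * x)) (- lam * expR (-lam * x)).
Proof.
have h1 : is_derive x 1 (fun x : R => - lam * x) (- lam).
  have := @is_deriveZ R R R id (- lam) x 1 1 (is_derive_id _ _).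
  by rewrite /GRing.scale /= mulr1.
have := @is_derive1_comp R expR (fun x => - lam * x) x _ _ _ h1.
by move=> H; rewrite mulrC; exact: (H _ (is_derive_expR _)).
Qed.

Lemma dg (x : R) : is_derive x 1 (fun x => 1 - expR (- lam * x)) (lam * expR (-lam * x)).
Proof.
have := @is_deriveB R R R (cst 1) (fun x => expR (- lam * x)) x 1 _ _ (is_derive_cst _ _ _) (du x).
by rewrite sub0r mulNr opprK.
Qed.

Definition Fj (j : nat) (x : R) : R := (1 - expR (- lam * x)) ^+ j.+1 * (lam * j.+1%:R)^-1.
Definition fj (j : nat) (x : R) : R := expR (- lam * x) * (1 - expR (- lam * x)) ^+ j.

Lemma dFj (j : nat) (x : R) : is_derive x 1 (Fj j) (fj j x).
Proof.
have := @is_deriveX R R (fun x => 1 - expR (- lam * x)) j.+1 x 1 _ (dg x).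
move=> H.
have := @is_deriveZ R R R _ (lam * j.+1%:R)^-1 x 1 _ H.
move=> H2.
have -> : Fj j = (lam * j.+1%:R)^-1 \*: (fun x => 1 - expR (- lam * x)) ^+ j.+1.
  by apply/funext => y; rewrite /Fj /= exprfctE /GRing.scale /= mulrC.
apply: (is_derive_eq H2).
rewrite /fj /GRing.scale /=.
have lj : lam * j.+1%:R != 0 by rewrite mulf_neq0 ?gt_eqF// ?lt0r_neq0.
rewrite /GRing.scale /= /fj; simpl; field; rewrite (gt_eqF lam0) andbT gt_eqF //; have : 0 <= j%:R :> R by []; lra.
Qed.

Lemma Fj_cont (j : nat) : continuous (Fj j : R -> R).
Proof.
move=> x; apply: differentiable_continuous; apply/derivable1_diffP.
exact: (@ex_derive _ _ _ _ _ _ _ (dFj j x)).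
Qed.

Lemma fj_cont (j : nat) : continuous (fj j : R -> R).
Proof.
move=> x.
have cu : continuous (fun x : R => expR (- lam * x)).
  move=> y; apply: differentiable_continuous; apply/derivable1_diffP.
  exact: (@ex_derive _ _ _ _ _ _ _ (du y)).
have cg : continuous (fun x : R => 1 - expR (- lam * x)).
  move=> y; apply: differentiable_continuous; apply/derivable1_diffP.
  exact: (@ex_derive _ _ _ _ _ _ _ (dg y)).
apply: (@cvgM _ _ _ _ (fun x => expR (- lam * x)) (fun x => (1 - expR (- lam * x)) ^+ j)).
  exact: cu.
apply: (@continuous_comp _ _ _ (fun x : R => 1 - expR (- lam * x)) (fun t => t ^+ j)).
  exact: cg.
exact: exprn_continuous.
Qed.

Lemma u_cvg : (fun x => expR (- lam * x)) x @[x --> +oo] --> (0:R).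
Proof.
rewrite (_ : (fun x => expR (- lam * x)) =
             (fun z => expR (- z)) \o (fun z => lam * z)); last first.
  by apply: eq_fun => x; rewrite mulNr.
apply: (@cvg_comp _ _ _ _ _ _ (pinfty_nbhs R)); last exact: cvgr_expR.
exact: gt0_cvgMry.
Qed.

Lemma Fj_cvg (j : nat) : Fj j x @[x --> +oo] --> (lam * j.+1%:R)^-1.
Proof.
pose h := fun t : R => (1 - t) ^+ j.+1 * (lam * j.+1%:R)^-1.
have ch : continuous h.
  move=> t; apply: (@cvgM _ _ _ _ (fun t : R => (1 - t) ^+ j.+1) (cst (lam * j.+1%:R)^-1)); last exact: cvg_cst.
  apply: (@continuous_comp _ _ _ (fun t : R => 1 - t) (fun t => t ^+ j.+1)); last exact: exprn_continuous.
  by apply: cvgB; [exact: cvg_cst | exact: cvg_id].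
have -> : Fj j = h \o (fun x => expR (- lam * x)) by [].
have -> : (lam * j.+1%:R)^-1 = h 0 by rewrite /h subr0 expr1n mul1r.
exact: (cvg_comp _ _ u_cvg (ch 0)).
Qed.

Lemma fj_ge0 (j : nat) (x : R) : 0 <= x -> 0 <= fj j x.
Proof.
move=> x0; rewrite /fj mulr_ge0 ?expR_ge0// exprn_ge0// subr_ge0 expR_le1.
by rewrite mulNr oppr_le0 mulr_ge0// ltW.
Qed.

Lemma int_fj (j : nat) :
  (\int[lebesgue_measure]_(x in `[0%R, +oo[) (fj j x)%:E = ((lam * j.+1%:R)^-1)%:E)%E.
Proof.
rewrite (@ge0_continuous_FTC2y R (fj j) (Fj j) 0 ((lam * j.+1%:R)^-1)).
- by rewrite /Fj mulr0 expR0 subrr expr0n /= mul0r oppr0 adde0.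
- move=> x x0; rewrite /fj mulr_ge0 ?expR_ge0// exprn_ge0// subr_ge0 expR_le1.
  by rewrite mulNr oppr_le0 mulr_ge0// ltW.
- exact/continuous_subspaceT/fj_cont.
- exact: Fj_cvg.
- move=> x _; exact: (@ex_derive _ _ _ _ _ _ _ (dFj j x)).
- by apply: cvg_at_right_filter; exact: Fj_cont.
- by move=> x _; rewrite derive1E; exact: (@derive_val _ _ _ _ _ _ _ (dFj j x)).
Qed.
End calc.
Arguments fj {R}.
Arguments Fj {R}.


Lemma mbigmaxe d (T : measurableType d) (R : realType) (I : eqType) (s : seq I)
  (F : I -> T -> \bar R) : (forall i, measurable_fun setT (F i)) ->
  measurable_fun setT (fun w => \big[maxe/-oo%E]_(i <- s) F i w).
Proof.
move=> mF; elim: s => [|a s IH].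
  by under eq_fun do rewrite big_nil; exact: measurable_cst.
under eq_fun do rewrite big_cons.
exact: measurable_maxe.
Qed.

Lemma mbigmaxr d (T : measurableType d) (R : realType) (I : eqType) (s : seq I)
  (F : I -> T -> R) : (forall i, measurable_fun setT (F i)) ->
  measurable_fun setT (fun w => \big[Num.max/0]_(i <- s) F i w).
Proof.
move=> mF; elim: s => [|a s IH].
  by under eq_fun do rewrite big_nil; exact: measurable_cst.
under eq_fun do rewrite big_cons.
exact: measurable_maxr.
Qed.

Theorem lemma3 (R : realType) (d : measure_display) (T : measurableType d)
  (P : probability T R) (n : nat) (lam : R)
  (e : 'I_n -> {RV P >-> R}) (f : 'I_n -> 'I_n -> {RV P >-> R}) :
  (0 < n)%N -> 0 < lam ->
  mutually_independent (ef_family e f) ->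
  (forall i, exponentially_distributed lam (ef_family e f i)) ->
  (\int[P]_w completion_time e f w <=
     (2 * harmonic_number (n ^ 2 + n)%N / lam)%:E)%E.
Proof.
move=> n0 lam0 ind expd.
pose I := ('I_n + 'I_n * 'I_n)%type.
pose X := ef_family e f.
pose N := (n + n * n)%N.
pose J := [set: ('I_n + 'I_n * 'I_n)%type]%SET.
pose M w := \big[Num.max/0]_(i : I) X i w.
have mM : measurable_fun setT M.
  by apply: mbigmaxr => i; exact: measurable_funPT.
pose MR : {RV P >-> R} := mfun_Sub (mem_set mM).
have MRE w : MR w = M w by [].
have M0 w : 0 <= M w by exact: bigmax_ge_id.
have XM i w : X i w <= M w by exact: le_bigmax.
have mY : measurable_fun setT (completion_time e f).
  rewrite /completion_time.
  apply: (@mbigmaxe _ _ _ _ _ (fun k w => maxe (e k w)%:E (Tk e f k w))) => k.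
  apply: measurable_maxe.
    by apply/measurable_EFinP; exact: measurable_funPT.
  rewrite /Tk.
  apply: (@mbigmaxe _ _ _ _ _ (fun m w => (e m w + f m k w)%:E)) => m.
  apply/measurable_EFinP; apply: measurable_funD; exact: measurable_funPT.
have YM w : (completion_time e f w <= (2 * M w)%:E)%E.
  rewrite /completion_time; apply: bigmax_le; first exact: leNye.
  move=> k _; rewrite ge_max; apply/andP; split.
    rewrite lee_fin; have := XM (inl k) w; have := M0 w; rewrite /X /=; lra.
  rewrite /Tk; apply: bigmax_le; first exact: leNye.
  move=> m _; rewrite lee_fin.
  have := XM (inl m) w; have := XM (inr (m, k)) w; rewrite /X /=; lra.
have step1 : (\int[P]_w completion_time e f w <= \int[P]_w (2 * M w)%:E)%E.
  rewrite integralE.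
  have h1 : (\int[P]_w (completion_time e f)^\+ w - \int[P]_w (completion_time e f)^\- w
     <= \int[P]_w (completion_time e f)^\+ w)%E.
    rewrite -[X in (_ <= X)%E]sube0; apply: leeB => //.
    by apply: integral_ge0 => w _; exact: funeneg_ge0.
  eapply le_trans; [exact: h1|].
  apply: ge0_le_integral => //.
  - exact: measurable_funepos.
  - by apply/measurable_EFinP; apply: measurable_funM.
  - by move=> w _; rewrite funeposE ge_max YM /= lee_fin mulr_ge0.
have step2 : (\int[P]_w (2 * M w)%:E = 2%:E * 'E_P[MR])%E.
  under eq_integral do rewrite EFinM.
  rewrite ge0_integralZl_EFin//.
  - by rewrite expectation_def.
  - by move=> w _; rewrite lee_fin.
  - exact/measurable_EFinP.
rewrite ge0_expectation_ccdf in step2; last by move=> w; rewrite MRE.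
have step3 : (\int[lebesgue_measure]_(r in `[0%R, +oo[) ccdf MR r <=
   \int[lebesgue_measure]_(r in `[0%R, +oo[) (\sum_(j < N) fj lam j r)%:E)%E.
  have mpre i (A : set R) : measurable A -> measurable (X i @^-1` A).
    by move=> mA; rewrite -[_ @^-1` _]setTI; exact: measurable_funPT.
  apply: ge0_le_integral => //.
  - exact: measurable_funTS (ccdf_measurable MR).
  - apply/measurable_EFinP; apply: measurable_funTS; apply: measurable_sum => j.
    by apply: continuous_measurable_fun; exact: fj_cont.
  move=> r; rewrite /= in_itv /= andbT => r0.
  have sumE : \sum_(j < N) fj lam j r = 1 - (1 - expR (- lam * r)) ^+ N.
    by rewrite /fj -mulr_sumr -(opprB ((1 - expR (- lam * r)) ^+ N) 1) subrX1; ring.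
  rewrite sumE.
  have N0 : (0 < N)%N by rewrite /N addn_gt0 n0.
  move: r0; rewrite le_eqVlt => /orP[/eqP <-|rpos].
    rewrite mulr0 expR0 subrr expr0n /= gtn_eqF // subr0.
    by apply: probability_le1; exact: measurable_itv.
  rewrite ccdf_1_cdf EFinB; apply: leeB => //.
  have Eset : MR @^-1` `]-oo, r] =
      [set w | forall i, i \in J -> (`]-oo, r]%classic : set R) (X i w)].
    apply/seteqP; split => w /=.
    - rewrite in_itv /= => Mr i _; rewrite in_itv /=; exact: le_trans (XM i w) Mr.
    - move=> H; rewrite in_itv /=; apply: bigmax_le => [|i _]; first exact: ltW.
      by have := H i (ltac:(by rewrite inE)); rewrite /= in_itv.
  have -> : cdf MR r = P (MR @^-1` `]-oo, r]) by [].
  rewrite Eset (ind J (fun _ => `]-oo, r]%classic)); last by move=> _; exact: measurable_itv.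
  have Pq i : P (X i @^-1` `]-oo, r]) = (fine (P (X i @^-1` `]-oo, r])))%:E.
    rewrite fineK// ge0_fin_numE ?measure_ge0//.
    apply: (le_lt_trans (probability_le1 P (mpre i _ (measurable_itv `]-oo, r])))); exact: ltey.
  under eq_bigr do rewrite Pq.
  rewrite prodEFin lee_fin.
  have -> : N = #|J| by rewrite cardsT card_sum card_prod card_ord.
  rewrite -prodr_const; apply: ler_prod => i _; apply/andP; split.
    by rewrite subr_ge0 expR_le1 mulNr oppr_le0 mulr_ge0// ltW.
  rewrite -lee_fin -Pq EFinB -(exponential_prob_itv0c lam rpos) -(expd i _ (measurable_itv _)).
  apply: le_measure; rewrite ?inE; [exact: measurable_itv | exact: measurable_itv | ].
  by move=> x /=; rewrite !in_itv /= => /andP[_ ->].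
have step4 : (\int[lebesgue_measure]_(r in `[0%R, +oo[) (\sum_(j < N) fj lam j r)%:E
   = (\sum_(j < N) (lam * j.+1%:R)^-1)%:E)%E.
  under eq_integral do rewrite -sumEFin.
  rewrite ge0_integral_sum//; last 2 first.
  - move=> j; apply/measurable_EFinP; apply: measurable_funTS.
    by apply: continuous_measurable_fun; exact: fj_cont.
  - by move=> j x; rewrite /= in_itv /= andbT lee_fin => /fj_ge0; apply.
  rewrite -sumEFin; apply: eq_bigr => j _; exact: int_fj.
apply: (le_trans step1); rewrite step2.
have -> : (n ^ 2 + n)%N = N by rewrite /N -mulnn addnC.
rewrite step4 in step3.
apply: (le_trans (lee_wpmul2l _ step3)); first done.
rewrite -EFinM lee_fin /harmonic_number -mulrA mulr_suml.
rewrite le_eqVlt; apply/orP; left; apply/eqP; congr (_ * _); by apply: eq_bigr => j _; rewrite invfM mulrC.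
Qed.
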